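(* There is a constant $C_3>0$ such that for every $\ell\ge1$ and all $p,q\in\mathbb N\times\mathbb Z$, $$(G_1\cdot G_2)^\ell(p,q)\le C_3^{|p|+|q|}.$$ Moreover, if $(G_1\cdot G_2)^\ell(p,q)\ne0$ then $q-p\in\Sigma_\ell$, where $$\Sigma_\ell=\{(x,y)\in\mathbb Z^2:\ x+y\ge\ell,\ y\ge-2\ell,\ 4x+3y\ge0,\ 2x+3y\ge0,\ y\text{ even}\}.$$
   Context: $\mathbb N=\{0,1,2,\dots\}$; for $t\in\mathbb R$, $\langle t\rangle:=1+|t|$. A directed weighted $\mathbb Z^2$-graph is a map $G\colon\mathbb Z^2\times\mathbb Z^2\to[0,\infty)$. The product is $(G\cdot G')(p,q)=\sum_{r\in\mathbb Z^2}G(p,r)G'(r,q)$, and $G^\ell$ is the $\ell$-fold product of $G$ with itself. $G_1$ is the graph whose only nonzero weights are: $G_1((k,h),(k-2,h+2))=\frac{\langle\max\{k,|h|\}\rangle}{\langle h\rangle}$ for $k\ge2$, $h\in\mathbb Z$; $G_1((k,h),(k,h))=1$ for $k\ge0$, $h\in\mathbb Z$; $G_1((k,h),(k+2,h-2))=\frac{\langle h\rangle}{\langle\max\{k,|h|\}\rangle}$ for $k\ge0$, $h\in\mathbb Z$. $G_2((k,h),(k',h'))=1$ if $k,k'\ge0$, $(k,h)\ne(k',h')$ and $(k'-k,h'-h)\in\{c_1(1,0)+c_2(-1,2): c_1,c_2\in\mathbb N\}$, and $G_2((k,h),(k',h'))=0$ otherwise. *)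

(* Defs.v *)
From HB Require Import structures.
From mathcomp Require Import all_boot all_order all_algebra.
From mathcomp Require Import all_classical all_reals.
From mathcomp Require Import ereal esum.
Set Implicit Arguments. Unset Strict Implicit. Unset Printing Implicit Defensive.
Import Order.TTheory GRing.Theory Num.Theory.
Local Open Scope classical_set_scope.
Local Open Scope ring_scope.

Definition vtx := (int * int)%type.

Section Graphs.
Variable R : realType.

(* A directed weighted Z^2-graph, with values taken in the extended reals
   (the weights of G1, G2 are finite nonnegative reals; products are
   nonnegative series over Z^2, hence valued in [0, +oo]). *)
Definition graph := vtx -> vtx -> \bar R.

Definition jap (t : int) : R := 1 + `|t%:~R : R|.

Definition gprod (G G' : graph) : graph :=
  fun p q => \esum_(r in [set: vtx]) (G p r * G' r q)%E.

Definition gid : graph := fun p q => if p == q then 1%E else 0%E.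

Fixpoint gpow (G : graph) (l : nat) : graph :=
  match l with
  | 0 => gid
  | l'.+1 => gprod (gpow G l') G
  end.

Definition G1 : graph := fun p q =>
  let k := p.1 in let h := p.2 in
  if (2 <= k) && (q == (k - 2, h + 2)) then
    (jap (Num.max k `|h|%:Z) / jap h)%:E
  else if (0 <= k) && (q == p) then 1%E
  else if (0 <= k) && (q == (k + 2, h - 2)) then
    (jap h / jap (Num.max k `|h|%:Z))%:E
  else 0%E.

Definition G2 : graph := fun p q =>
  if `[< 0 <= p.1 /\ 0 <= q.1 /\ p <> q /\
        exists c1 c2 : nat,
          q.1 - p.1 = c1%:Z * 1 + c2%:Z * (-1) /\
          q.2 - p.2 = c1%:Z * 0 + c2%:Z * 2 >]
  then 1%E else 0%E.

End Graphs.

Definition Sigma (l : nat) : set vtx :=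
  [set v | let x := v.1 in let y := v.2 in
     [/\ l%:Z <= x + y, - (2 * l%:Z) <= y, 0 <= 4 * x + 3 * y,
         0 <= 2 * x + 3 * y & (2 %| y)%Z]].

(* |p| for p in Z^2, taken as the l^1 norm |k| + |h| *)
Definition vnorm (p : vtx) : nat := (`|p.1| + `|p.2|)%N.

Definition vsub (q p : vtx) : vtx := (q.1 - p.1, q.2 - p.2).

(* Main.v *)
Require Import Defs.
From HB Require Import structures.
From mathcomp Require Import all_boot all_order all_algebra.
From mathcomp Require Import all_classical all_reals.
From mathcomp Require Import ereal esum.
From mathcomp Require Import zify ring lra.
Import Order.TTheory GRing.Theory Num.Theory.
Local Open Scope classical_set_scope.
Local Open Scope ring_scope.

Section Real.
Variable R : realType.

Definition Xf (n : nat) (a : R) : R := 1 + a / (2 * n%:R).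
Definition Pf n a := Xf n a ^+ n.

Lemma bern (y : R) n : 0 <= y -> y <= 1 -> 1 - n%:R * y <= (1 - y) ^+ n.
Proof.
move=> y0 y1; elim: n => [|n IH]; first by rewrite expr0 mul0r subr0.
have h0 : 0 <= (1 - y) ^+ n by apply: exprn_ge0; lra.
have hn : 0 <= n%:R * (y * y) :> R by apply: mulr_ge0 => //; nra.
rewrite exprS -natr1; nra.
Qed.

Lemma quarter (y : R) n : 0 <= y -> n.+1%:R * y <= 1 -> 1/4 <= (1 - y) ^+ n.
Proof.
move=> y0 hy.
have [n1 [n2 [en [h1 h2]]]] : exists n1 n2, n = (n1 + n2)%N /\
   (2 * n1 <= n.+1)%N /\ (2 * n2 <= n.+1)%N.
  by exists (n %/ 2)%N, (n - n %/ 2)%N; split; [|split]; lia.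
have hN : 1 <= n.+1%:R :> R by rewrite ler1n.
have y1 : y <= 1 by nra.
have e1 : 2 * n1%:R <= n.+1%:R :> R by rewrite -[2]/(2%:R) -natrM ler_nat.
have e2 : 2 * n2%:R <= n.+1%:R :> R by rewrite -[2]/(2%:R) -natrM ler_nat.
have b1 := @bern y n1 y0 y1; have b2 := @bern y n2 y0 y1.
have f1 : 1/2 <= (1 - y) ^+ n1 by nra.
have f2 : 1/2 <= (1 - y) ^+ n2 by nra.
rewrite en exprD; nra.
Qed.

Lemma X_ge1 n a : 0 <= a -> 1 <= Xf n a.
Proof. by move=> a0; rewrite /Xf lerDl divr_ge0 // mulr_ge0. Qed.

Lemma P_ge1 n a : 0 <= a -> 1 <= Pf n a.
Proof. by move=> a0; rewrite /Pf exprn_ege1 // X_ge1. Qed.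

Lemma P_gt0 n a : 0 <= a -> 0 < Pf n a.
Proof. by move=> a0; apply: (lt_le_trans _ (P_ge1 n a a0)). Qed.

Lemma X_step n a : 0 <= a -> (0 < n)%N ->
  Xf n.+1 a = Xf n a * (1 - a / ((n%:R + 1) * (2 * n%:R + a))).
Proof.
move=> a0 n0; have N0 : 0 < n%:R :> R by rewrite ltr0n.
rewrite /Xf -natr1; field.
apply/and3P; split; rewrite ?lt0r_neq0 //; nra.
Qed.

Lemma X_dec n a : 0 <= a -> (0 < n)%N -> Xf n.+1 a <= Xf n a.
Proof.
move=> a0 n0; have N0 : 0 < n%:R :> R by rewrite ltr0n.
rewrite X_step //.
have y0 : 0 <= a / ((n%:R + 1) * (2 * n%:R + a)) by apply: divr_ge0 => //; nra.
have := X_ge1 n a a0; nra.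
Qed.

Lemma key1 (N a : R) : 1 <= N -> 0 <= a ->
  1 <= (1 + a / (2 * (N + 1))) * (1 - N * (a / ((N + 1) * (2 * N + a)))).
Proof.
move=> N1 a0; rewrite -subr_ge0.
have -> : (1 + a / (2 * (N + 1))) * (1 - N * (a / ((N + 1) * (2 * N + a)))) - 1
   = a ^+ 2 / (2 * (N + 1) ^+ 2 * (2 * N + a)).
  by field; apply/andP; split; rewrite lt0r_neq0 //; nra.
apply: divr_ge0; first by apply: sqr_ge0.
apply: mulr_ge0; last by nra.
by apply: mulr_ge0 => //; apply: sqr_ge0.
Qed.

Lemma Pmono n a : 0 <= a -> Pf n a <= Pf n.+1 a.
Proof.
move=> a0; case: n => [|n].
  by rewrite /Pf expr0 expr1 X_ge1.
set m := n.+1.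
have m0 : (0 < m)%N by [].
have N1 : 1 <= m%:R :> R by rewrite ler1n.
set y := a / ((m%:R + 1) * (2 * m%:R + a)).
have y0 : 0 <= y by apply: divr_ge0 => //; nra.
have y1 : y <= 1.
  rewrite /y ler_pdivrMr; last by nra.
  nra.
have hX := X_ge1 m a a0.
have hXn : 0 <= Xf m a ^+ m by apply: exprn_ge0; lra.
have b := @bern y m y0 y1.
have k := @key1 m%:R a N1 a0.
have e : Xf m.+1 a = 1 + a / (2 * (m%:R + 1)) by rewrite /Xf natr1.
rewrite -/y in k.
have hX1 : 0 <= 1 + a / (2 * (m%:R + 1)) by rewrite -e; have := X_ge1 m.+1 a a0; lra.
have hy : 0 <= (1 - y) ^+ m by apply: exprn_ge0; lra.
have E : Xf m.+1 a ^+ m = Xf m a ^+ m * (1 - y) ^+ m by rewrite X_step // exprMn.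
rewrite /Pf exprS E e.
set X1 := 1 + _ in hX1 k *.
have h2 : 1 <= X1 * (1 - y) ^+ m by nra.
nra.
Qed.

Lemma PD1 n a : 0 <= a -> Xf n.+1 a * Pf n a <= 4 * Pf n.+1 a.
Proof.
move=> a0; case: n => [|n].
  rewrite /Pf expr0 expr1 mulr1; have := X_ge1 1 a a0; lra.
set m := n.+1.
have m0 : (0 < m)%N by [].
have N1 : 1 <= m%:R :> R by rewrite ler1n.
set y := a / ((m%:R + 1) * (2 * m%:R + a)).
have y0 : 0 <= y by apply: divr_ge0 => //; nra.
have hy : m.+1%:R * y <= 1.
  have -> : m.+1%:R * y = a / (2 * m%:R + a).
    rewrite -natr1 /y; field; apply/andP; split; rewrite lt0r_neq0 //; nra.
  rewrite ler_pdivrMr; nra.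
have q := @quarter y m y0 hy.
have hX := X_ge1 m a a0.
have hX1 := X_ge1 m.+1 a a0.
have hXn : 0 <= Xf m a ^+ m by apply: exprn_ge0; lra.
have E : Xf m.+1 a ^+ m = Xf m a ^+ m * (1 - y) ^+ m by rewrite X_step // exprMn.
rewrite /Pf exprS E.
set X1 := Xf m.+1 a in hX1 *.
set Z := Xf m a ^+ m in hXn *.
have : 0 <= X1 * Z by nra.
nra.
Qed.

Lemma PU n a : 0 <= a -> Pf n.+1 a <= Xf n.+1 a * Pf n a.
Proof.
move=> a0; case: n => [|n]; first by rewrite /Pf expr0 expr1 mulr1.
rewrite /Pf exprS ler_wpM2l //; first by have := X_ge1 n.+2 a a0; lra.
rewrite lerXn2r // ?X_dec // nnegrE; [have := X_ge1 n.+2 a a0|have := X_ge1 n.+1 a a0]; lra.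
Qed.

Lemma Pa n a : 0 <= a -> Pf n (a + 1) <= 2 * Pf n a.
Proof.
move=> a0; case: n => [|n]; first by rewrite /Pf !expr0; lra.
set m := n.+1.
have N1 : 1 <= m%:R :> R by rewrite ler1n.
set z := 1 / (2 * m%:R + a + 1).
have z0 : 0 <= z by apply: divr_ge0 => //; nra.
have E : Xf m a = Xf m (a + 1) * (1 - z).
  rewrite /Xf /z; field; apply/andP; split; rewrite lt0r_neq0 //; nra.
have z1 : z <= 1.
  rewrite /z ler_pdivrMr; nra.
have hz : 1/2 <= 1 - m%:R * z.
  rewrite -subr_ge0.
  have -> : 1 - m%:R * z - 1/2 = (a + 1) / (2 * (2 * m%:R + a + 1)).
    rewrite /z; field; rewrite lt0r_neq0 //; nra.
  apply: divr_ge0; nra.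
have b := @bern z m z0 z1.
have hX := X_ge1 m (a + 1) (ltW (ltr_wpDl a0 ltr01)).
have hXn : 0 <= Xf m (a + 1) ^+ m by apply: exprn_ge0; lra.
rewrite /Pf E exprMn.
nra.
Qed.

Lemma Pmono_le m n a : 0 <= a -> (m <= n)%N -> Pf m a <= Pf n a.
Proof.
move=> a0 /subnK <-; elim: (n - m)%N => [|k IH]; first by rewrite add0n.
by rewrite addSn; apply: (le_trans IH (Pmono _ _ a0)).
Qed.

Lemma Pbound n j : Pf n j%:R <= (3/2) ^+ (maxn n j).
Proof.
case: (leqP j n) => hjn.

  case: n hjn => [|n] hjn.
    by rewrite /Pf !expr0.
  rewrite /Pf; apply: lerXn2r; rewrite ?nnegrE.
  - by have := X_ge1 n.+1 j%:R (ler0n _ _); lra.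
  - lra.
  rewrite /Xf.
  have h : j%:R <= n.+1%:R :> R by rewrite ler_nat.
  have h1 : 1 <= n.+1%:R :> R by rewrite ler1n.
  have -> : 3/2 = 1 + 1/2 :> R by field.
  rewrite lerD2l ler_pdivrMr; nra.

apply: (le_trans (@Pmono_le n j j%:R (ler0n _ _) (ltnW hjn))).
rewrite -[j%:R]/(j%:R : R).
have j0 : 0 < j%:R :> R by rewrite ltr0n; apply: leq_ltn_trans (leq0n n) hjn.
rewrite /Pf /Xf le_eqVlt; apply/orP; left; apply/eqP; congr (_ ^+ _); field; rewrite lt0r_neq0 //.
Qed.

End Real.
Arguments Xf {R}. Arguments Pf {R}. Arguments bern {R}. Arguments quarter {R}.
Arguments X_ge1 {R}. Arguments P_ge1 {R}. Arguments P_gt0 {R}. Arguments X_step {R}.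
Arguments X_dec {R}. Arguments key1 {R}. Arguments Pmono {R}. Arguments PD1 {R}.
Arguments PU {R}. Arguments Pa {R}. Arguments Pmono_le {R}. Arguments Pbound {R}.

Section Pot.
Variable R : realType.

Definition tt (v : vtx) : int := (v.2 %/ 2)%Z.
Definition aa (v : vtx) : nat := absz (Num.max (v.1 + v.2) 0).
Definition Phi (t : int) (a : nat) : R :=
  if 0 <= t then Pf (absz t) a%:R else (Pf (absz t) a%:R)^-1.
Definition gg (v : vtx) : R := Phi (tt v) (aa v).

Lemma Pn_ge1 n (a : nat) : 1 <= Pf n (a%:R : R).
Proof. exact: P_ge1. Qed.
Lemma Pn_gt0 n (a : nat) : 0 < Pf n (a%:R : R).
Proof. exact: P_gt0. Qed.

Lemma Phi_gt0 t a : 0 < Phi t a.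
Proof. by rewrite /Phi; case: ifP => _; rewrite ?invr_gt0 Pn_gt0. Qed.

Lemma gg_gt0 v : 0 < gg v.
Proof. exact: Phi_gt0. Qed.

Lemma Phi_le t a : Phi t a <= Pf (absz t) a%:R.
Proof.
rewrite /Phi; case: ifP => _ //.
have h := Pn_ge1 (absz t) a.
apply: (le_trans _ h); rewrite invr_le1 ?unitfE ?lt0r_neq0 ?Pn_gt0 //.
Qed.

Lemma Phi_ge t a : (Pf (absz t) a%:R)^-1 <= Phi t a.
Proof.
rewrite /Phi; case: ifP => _ //.
have h := Pn_ge1 (absz t) a.
apply: (le_trans _ h); rewrite invr_le1 ?unitfE ?lt0r_neq0 ?Pn_gt0 //.
Qed.

Lemma X_mono_a n (a b : R) : 0 <= a -> a <= b -> Xf n a <= Xf n b.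
Proof.
move=> a0 ab; rewrite /Xf lerD2l ler_wpM2r // invr_ge0 mulr_ge0 //.
Qed.

Lemma P_mono_a n (a b : R) : 0 <= a -> a <= b -> Pf n a <= Pf n b.
Proof.
move=> a0 ab; rewrite /Pf; apply: lerXn2r; rewrite ?nnegrE.
- by have := X_ge1 n a a0; lra.
- by have := X_ge1 n b (le_trans a0 ab); lra.
- exact: X_mono_a.
Qed.

Lemma Phi_t t a : Phi t a <= Phi (t + 1) a.
Proof.
rewrite /Phi; case: (lerP 0 t) => ht.
  have -> : (0 <= t + 1)%R = true by apply/idP; lia.
  have -> : absz (t + 1) = (absz t).+1 by lia.
  exact: Pmono.
case: (lerP 0 (t + 1)) => ht1.
  have -> : absz (t + 1) = 0%N by lia.
  have -> : absz t = 1%N by lia.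
  rewrite {2}/Pf expr0.
  have h := Pn_ge1 1 a.
  rewrite invr_le1 ?unitfE ?lt0r_neq0 ?Pn_gt0 //; lra.
have -> : absz t = (absz (t + 1)).+1 by lia.
rewrite lef_pV2 ?posrE ?Pn_gt0 //.
exact: Pmono.
Qed.

Lemma Phi_a t a : Phi t a <= 2 * Phi t a.+1.
Proof.
have h1 := Pn_ge1 (absz t) a; have h2 := Pn_ge1 (absz t) a.+1.
have m : Pf (absz t) a%:R <= Pf (absz t) a.+1%:R :> R.
  by apply: P_mono_a; rewrite ?ler0n // ler_nat.
rewrite /Phi; case: ifP => _; first lra.
have pa : Pf (absz t) a.+1%:R <= 2 * Pf (absz t) a%:R :> R.
  by rewrite -natr1; apply: Pa.
set P0 := Pf (absz t) a%:R in h1 m pa *.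
set P1 := Pf (absz t) a.+1%:R in h2 m pa *.
have -> : 2 * P1^-1 = (P1 / 2)^-1 by rewrite invfM invrK mulrC.
rewrite lef_pV2 ?posrE; lra.
Qed.

Lemma Phi_mono t a c j : Phi t a <= 2 ^+ j * Phi (t + c%:Z) (a + j)%N.
Proof.
have h : Phi t a <= Phi (t + c%:Z) a.
  elim: c => [|c IH]; first by rewrite addr0.
  apply: (le_trans IH).
  have -> : t + c.+1%:Z = t + c%:Z + 1 by lia.
  exact: Phi_t.
apply: (le_trans h); elim: j => [|j IH]; first by rewrite expr0 mul1r addn0.
apply: (le_trans IH); rewrite addnS exprS [2 * 2 ^+ j]mulrC -mulrA ler_pM2l ?exprn_gt0 //.
exact: Phi_a.
Qed.

End Pot.

Section Cases.
Variable R : realType.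
Implicit Types (M H A : R).

Lemma ratio_lem (u v x y : R) : 0 < v -> 0 < y -> u * y <= x * v -> u / v <= x / y.
Proof.
move=> v0 y0 h; rewrite ler_pdivlMr // mulrAC ler_pdivrMr //.
Qed.

Lemma inv_ratio (x y : R) : 8 * x^-1 / y^-1 = 8 * y / x.
Proof. by rewrite invrK mulrAC. Qed.

Lemma Qfact A n : 0 <= A ->
  A / (2 * n.+1%:R) * (2 * (n%:R + 1)) = A /\ 0 <= A / (2 * n.+1%:R) :> R.
Proof.
move=> A0; split; first by rewrite natr1 divfK // mulf_neq0 // lt0r_neq0 ?ltr0n.
by rewrite divr_ge0 // mulr_ge0.
Qed.

Lemma D1case M H A n : 0 <= M -> M <= A -> n%:R + n%:R <= H ->
  (1 + M) / (1 + H) <= 8 * Pf n.+1 A / Pf n A.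
Proof.
move=> M0 MA nH.
have N0 : 0 <= n%:R :> R by [].
have H0 : 0 <= H by lra.
have A0 : 0 <= A by lra.
have P0 := P_gt0 n A A0.
have d := PD1 n A A0.
apply: ratio_lem => //; first lra.
have hP : 0 <= Pf n A by lra.
suff h : (1 + M) <= 2 * Xf n.+1 A * (1 + H).
  have : (1 + M) * Pf n A <= 2 * Xf n.+1 A * (1 + H) * Pf n A by apply: ler_wpM2r.
  nra.
rewrite /Xf; have [hQ Q0] := Qfact A n A0.
set Q := A / (2 * n.+1%:R) in hQ Q0 *.
nra.
Qed.

Lemma D2case M H A : 1 <= H -> M <= H + A -> 0 <= A ->
  (1 + M) / (1 + H) <= 8 * Pf 0 A / (Pf 1 A)^-1.
Proof.
move=> H1 MHA A0.
rewrite invrK /Pf expr0 expr1 /Xf mulr1.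
rewrite ler_pdivrMr; last lra.
have -> : A / (2 * 1%:R) = A / 2 by rewrite mulr1.
nra.
Qed.

Lemma D3case M H A m : m.+1%:R <= H -> M <= H + A -> 0 <= A ->
  (1 + M) / (1 + H) <= 8 * (Pf m A)^-1 / (Pf m.+1 A)^-1.
Proof.
move=> mH MHA A0.
have N0 : 0 <= m%:R :> R by [].
have P0 := P_gt0 m A A0.
have d := PD1 m A A0.
rewrite inv_ratio; rewrite -natr1 in mH.
apply: ratio_lem => //; first lra.
have hP : 0 <= Pf m A by lra.
suff h : (1 + M) <= 2 * Xf m.+1 A * (1 + H).
  have : (1 + M) * Pf m A <= 2 * Xf m.+1 A * (1 + H) * Pf m A by apply: ler_wpM2r.
  nra.
rewrite /Xf; have [hQ Q0] := Qfact A m A0.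
set Q := A / (2 * m.+1%:R) in hQ Q0 *.
nra.
Qed.

Lemma U1case M H A m : 0 <= M -> A <= M + M -> H <= A ->
  (m.+1%:R + m.+1%:R) <= H -> H <= m.+1%:R + m.+1%:R + 1 ->
  (1 + H) / (1 + M) <= 8 * Pf m A / Pf m.+1 A.
Proof.
move=> M0 AM HA h1 h2.
have N0 : 0 <= m%:R :> R by [].
rewrite -natr1 in h1 h2.
have A0 : 0 <= A by lra.
have P0 := P_gt0 m A A0.
have P1 := P_gt0 m.+1 A A0.
have u := PU m A A0.
apply: ratio_lem => //; first lra.
have hP : 0 <= Pf m A by lra.
suff h : (1 + H) * Xf m.+1 A <= 8 * (1 + M).
  have H0 : 0 <= 1 + H by lra.
  have : (1 + H) * Pf m.+1 A <= (1 + H) * (Xf m.+1 A * Pf m A) by apply: ler_wpM2l.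
  have : (1 + H) * Xf m.+1 A * Pf m A <= 8 * (1 + M) * Pf m A by apply: ler_wpM2r.
  nra.
rewrite /Xf; have [hQ Q0] := Qfact A m A0.
set Q := A / (2 * m.+1%:R) in hQ Q0 *.
nra.
Qed.

Lemma U2case M H A : 0 <= H -> H <= 1 -> A <= M + M -> 0 <= A ->
  (1 + H) / (1 + M) <= 8 * (Pf 1 A)^-1 / Pf 0 A.
Proof.
move=> H0 H1 AM A0.
rewrite /Pf expr0 divr1 expr1 /Xf.
have -> : A / (2 * 1%:R) = A / 2 by rewrite mulr1.
rewrite ler_pdivrMr; last lra.
rewrite mulrAC ler_pdivlMr; last lra.
nra.
Qed.

Lemma U3case M H A n : 0 <= H -> H <= n%:R + n%:R -> H + A <= M -> 0 <= A ->
  (1 + H) / (1 + M) <= 8 * (Pf n.+1 A)^-1 / (Pf n A)^-1.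
Proof.
move=> H0 Hn HAM A0.
have N0 : 0 <= n%:R :> R by [].
have P0 := P_gt0 n A A0.
have P1 := P_gt0 n.+1 A A0.
have u := PU n A A0.
rewrite inv_ratio.
apply: ratio_lem => //; first lra.
have hP : 0 <= Pf n A by lra.
suff h : (1 + H) * Xf n.+1 A <= 8 * (1 + M).
  have H1 : 0 <= 1 + H by lra.
  have : (1 + H) * Pf n.+1 A <= (1 + H) * (Xf n.+1 A * Pf n A) by apply: ler_wpM2l.
  have : (1 + H) * Xf n.+1 A * Pf n A <= 8 * (1 + M) * Pf n A by apply: ler_wpM2r.
  nra.
rewrite /Xf; have [hQ Q0] := Qfact A n A0.
set Q := A / (2 * n.+1%:R) in hQ Q0 *.
nra.
Qed.

End Cases.

Section G1b.
Variable R : realType.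

Lemma i2r (x y : int) : x <= y -> (x%:~R : R) <= y%:~R.
Proof. by rewrite ler_int. Qed.

Lemma down_bound (k h : int) : 0 <= k ->
  jap R (Num.max k `|h|%:Z) / jap R h <=
  8 * gg R (k - 2, h + 2) / gg R (k, h).
Proof.
move=> k0; rewrite /gg /tt /aa /=.
have -> : k - 2 + (h + 2) = k + h by lia.
have -> : ((h + 2) %/ 2)%Z = (h %/ 2)%Z + 1 by lia.
set t := (h %/ 2)%Z.
have ht1 : t + t <= h by rewrite /t; lia.
have ht2 : h <= t + t + 1 by rewrite /t; lia.
set a := absz (Num.max (k + h) 0).
have ea : a%:Z = Num.max (k + h) 0 by rewrite /a; lia.
rewrite /jap -!intr_norm /Phi.
set M := Num.max k `|h|%:Z.
have eM : M = Num.max k `|h|%:Z by [].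
have A0 : 0 <= (a%:R : R) by [].
case: (lerP 0 t) => ht.
  have -> : (0 <= t + 1) = true by apply/idP; lia.
  have -> : absz (t + 1) = (absz t).+1 by lia.
  apply: D1case.
  - have := @i2r 0 `|M| ltac:(lia); done.
  - have := @i2r `|M| a ltac:(lia); done.
  - have := @i2r ((absz t)%:Z + (absz t)%:Z) `|h| ltac:(lia); rewrite intrD; done.
case: (lerP 0 (t + 1)) => ht'.
  have -> : absz (t + 1) = 0%N by lia.
  have -> : absz t = 1%N by lia.
  apply: D2case => //.
  - have := @i2r 1 `|h| ltac:(lia); done.
  - have := @i2r `|M| (`|h| + a) ltac:(lia); rewrite intrD; done.
have -> : absz t = (absz (t + 1)).+1 by lia.
apply: D3case => //.
- have := @i2r (absz (t + 1)).+1 `|h| ltac:(lia); done.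
- have := @i2r `|M| (`|h| + a) ltac:(lia); rewrite intrD; done.
Qed.

Lemma up_bound (k h : int) : 0 <= k ->
  jap R h / jap R (Num.max k `|h|%:Z) <=
  8 * gg R (k + 2, h - 2) / gg R (k, h).
Proof.
move=> k0; rewrite /gg /tt /aa /=.
have -> : k + 2 + (h - 2) = k + h by lia.
have -> : ((h - 2) %/ 2)%Z = (h %/ 2)%Z - 1 by lia.
set t := (h %/ 2)%Z.
have ht1 : t + t <= h by rewrite /t; lia.
have ht2 : h <= t + t + 1 by rewrite /t; lia.
set a := absz (Num.max (k + h) 0).
have ea : a%:Z = Num.max (k + h) 0 by rewrite /a; lia.
rewrite /jap -!intr_norm /Phi.
set M := Num.max k `|h|%:Z.
have eM : M = Num.max k `|h|%:Z by [].
have A0 : 0 <= (a%:R : R) by [].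
case: (lerP 1 t) => ht.
  have -> : (0 <= t) = true by apply/idP; lia.
  have -> : (0 <= t - 1) = true by apply/idP; lia.
  have -> : absz t = (absz (t - 1)).+1 by lia.
  apply: U1case.
  - have := @i2r 0 `|M| ltac:(lia); done.
  - have := @i2r a (`|M| + `|M|) ltac:(lia); rewrite intrD; done.
  - have := @i2r `|h| a ltac:(lia); done.
  - have := @i2r ((absz (t - 1)).+1%:Z + (absz (t - 1)).+1%:Z) `|h| ltac:(lia); rewrite intrD; done.
  - have := @i2r `|h| ((absz (t - 1)).+1%:Z + (absz (t - 1)).+1%:Z + 1) ltac:(lia); rewrite !intrD; done.
case: (lerP 0 t) => ht'.
  have -> : absz (t - 1) = 1%N by lia.
  have -> : absz t = 0%N by lia.
  have -> : (0 <= t - 1) = false by apply/negbTE; lia.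
  apply: U2case.
  - have := @i2r 0 `|h| ltac:(lia); done.
  - have := @i2r `|h| 1 ltac:(lia); done.
  - have := @i2r a (`|M| + `|M|) ltac:(lia); rewrite intrD; done.
  - done.
have -> : (0 <= t - 1) = false by apply/negbTE; lia.
have -> : absz (t - 1) = (absz t).+1 by lia.
apply: U3case; last done.
- have := @i2r 0 `|h| ltac:(lia); done.
- have := @i2r `|h| ((absz t)%:Z + (absz t)%:Z) ltac:(lia); rewrite intrD; done.
- have := @i2r (`|h| + a) `|M| ltac:(lia); rewrite intrD; done.
Qed.


Lemma G1_ge0 r r' : (0 <= G1 R r r')%E.
Proof.
case: r => k h; rewrite /G1 /=.
have j0 : forall z, (0 < jap R z)%R.
  by move=> z; rewrite /jap; apply: (lt_le_trans ltr01); rewrite lerDl normr_ge0.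
case: ifP => _; first by rewrite lee_fin divr_ge0 // ltW.
case: ifP => _ //.
case: ifP => _ //.
by rewrite lee_fin divr_ge0 // ltW.
Qed.

Lemma G1_bound r r' : (G1 R r r' <= (8 * gg R r' / gg R r)%:E)%E.
Proof.
case: r => k h; rewrite /G1 /=.
have g0 := gg_gt0 R (k, h); have g1 := gg_gt0 R r'.
case: ifP => [/andP[hk /eqP ->]|_].
  by rewrite lee_fin; apply: down_bound; lia.
case: ifP => [/andP[hk /eqP ->]|_].
  by rewrite lee_fin mulfK ?lt0r_neq0 //; lra.
case: ifP => [/andP[hk /eqP ->]|_].
  by rewrite lee_fin; apply: up_bound.
by rewrite lee_fin divr_ge0 // ?mulr_ge0 // ltW.
Qed.

Lemma G1_supp r r' : G1 R r r' != 0%E ->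
  (0 <= r.1)%R /\ (r' = (r.1 - 2, r.2 + 2)%R \/ r' = r \/ r' = (r.1 + 2, r.2 - 2)%R).
Proof.
case: r => k h; rewrite /G1 /=.
case: ifP => [/andP[hk /eqP ->] _|_]; first by split; [lia|left].
case: ifP => [/andP[hk /eqP ->] _|_]; first by split; [lia|right; left].
case: ifP => [/andP[hk /eqP ->] _|_]; first by split; [lia|right; right].
by rewrite eqxx.
Qed.

Lemma G2_ge0 r q : (0 <= G2 R r q)%E.
Proof. by rewrite /G2; case: ifP. Qed.

Lemma G2_le1 r q : (G2 R r q <= 1)%E.
Proof. by rewrite /G2; case: ifP. Qed.

Lemma G2_supp r q : G2 R r q != 0%E ->
  (0 <= r.1) /\ (0 <= q.1) /\ r <> q /\
   exists c1 c2 : nat, (q.1 - r.1 = c1%:Z - c2%:Z) /\ (q.2 - r.2 = c2%:Z + c2%:Z).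
Proof.
rewrite /G2; case: asboolP => [[h1 [h2 [h3 [c1 [c2 [e1 e2]]]]]] _|_]; last by rewrite eqxx.
do 3 (split => //); exists c1, c2; split; lia.
Qed.

Lemma G2_pot r q : G2 R r q != 0%E ->
  gg R r <= 2 ^+ absz ((q.1 + q.2) - (r.1 + r.2))%R * gg R q.
Proof.
move=> /G2_supp [h1 [h2 [h3 [c1 [c2 [e1 e2]]]]]].
rewrite /gg.
have et : tt q = tt r + c2%:Z by rewrite /tt; lia.
set j := (aa q - aa r)%N.
have ea : aa q = (aa r + j)%N by rewrite /j /aa; lia.
have hj : (j <= absz ((q.1 + q.2) - (r.1 + r.2))%R)%N by rewrite /j /aa; lia.
rewrite et ea.
apply: (le_trans (Phi_mono R (tt r) (aa r) c2 j)).
rewrite ler_wpM2r //; first exact: ltW (Phi_gt0 _ _ _).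
by rewrite ler_eXn2l // ltr1n.
Qed.

End G1b.

From mathcomp Require Import finmap.
Section Esum.
Variable R : realType.
Local Open Scope ereal_scope.

Lemma sum_if_le (T : eqType) (s : seq T) (x : T) (c : \bar R) :
  uniq s -> 0 <= c -> \sum_(i <- s) (if x == i then c else 0) <= c.
Proof.
move=> + c0; elim: s => [|i s IH]; first by rewrite big_nil.
move=> /andP[nis us]; rewrite big_cons.
case: ifP => [/eqP exi|_]; last by rewrite add0e IH.
rewrite big1_seq ?adde0 // => j /andP[_ js].
case: ifP => // /eqP exj.
by move: nis; rewrite -exi exj js.
Qed.

Lemma sum_filt_ge (U : eqType) (T : Type) (L : seq U) (phi : U -> T) (F : U -> \bar R)
   (P : pred U) j :
  (forall j, 0 <= F j) -> j \in L -> P j -> F j <= \sum_(j' <- L | P j') F j'.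
Proof.
move=> F0 jL Pj; rewrite (big_rem _ jL) Pj.
by apply: leeDl; apply: sume_ge0.
Qed.

Lemma esum_le_list (T : choiceType) (U : eqType) (f : T -> \bar R) (L : seq U)
    (phi : U -> T) :
  (forall i, 0 <= f i) ->
  (forall i, f i != 0 -> exists2 j, j \in L & phi j = i) ->
  \esum_(i in [set: T]) f i <= \sum_(j <- L) f (phi j).
Proof.
move=> f0 cov.
apply: ge_ereal_sup => /= _ [X [finX _] <-].
rewrite fsbig_finite //=.
set s := finmap.enum_fset _.
have us : uniq s by exact: fset_uniq.
apply: (@le_trans _ _ (\sum_(i <- s) \sum_(j <- L | phi j == i) f (phi j))).
  apply: lee_sum => i _.
  case: (eqVneq (f i) 0) => [->|/cov [j jL <-]]; first by apply: sume_ge0.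
  by apply: (@sum_filt_ge U T L phi (fun j => f (phi j)) (fun j' => phi j' == phi j) j).
rewrite (eq_bigr (fun i => \sum_(j <- L) (if phi j == i then f (phi j) else 0))); last first.
  by move=> i _; rewrite big_mkcond.
rewrite exchange_big /=.
apply: lee_sum => j _.
exact: sum_if_le.
Qed.

Lemma esum_neq0 (T : choiceType) (f : T -> \bar R) :
  \esum_(i in [set: T]) f i != 0 -> exists i, f i != 0.
Proof.
move=> h; apply/not_existsP => hn; move/eqP: h; apply.
by apply: esum1 => i _; apply/eqP; apply/negPn/negP => /(hn i).
Qed.

End Esum.

Section Main.
Variable R : realType.
Local Open Scope ereal_scope.

Definition TT : graph R := gprod (G1 R) (G2 R).
Definition sv (v : vtx) : int := (v.1 + v.2)%R.

Definition dd (e : nat) : int := if e == 0%N then (-2)%R else if e == 1%N then 0%R else 2%R.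
Definition phi (q : vtx) (j : nat * (nat * nat)) : vtx :=
  ((q.1 - j.2.1%:Z + j.2.2%:Z - dd j.1)%R, (q.2 - j.2.2%:Z - j.2.2%:Z + dd j.1)%R).

Lemma prod_neq0 (x y : \bar R) : x * y != 0 -> x != 0 /\ y != 0.
Proof.
move=> h; split; apply/negP => /eqP e; move: h; rewrite e ?mul0e ?mule0 eqxx //.
Qed.

Lemma TT_supp r q : TT r q != 0 -> exists r', G1 R r r' != 0 /\ G2 R r' q != 0.
Proof.
rewrite /TT /gprod => /esum_neq0 [r' /prod_neq0 [h1 h2]]; by exists r'.
Qed.

Lemma TT_param r q : TT r q != 0 ->
  exists e c1 c2 : nat, [/\ (e < 3)%N, (1 <= c1 + c2)%N, r = phi q (e, (c1, c2)),
    (0 <= r.1)%R & Sigma 1 (vsub q r)].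
Proof.
move=> /TT_supp [r' [h1 h2]].
have [r0 hr'] := @G1_supp R _ _ h1.
have [a0 [b0 [rq [c1 [c2 [e1 e2]]]]]] := @G2_supp R _ _ h2.
clear h1 h2.
move: r q r' r0 a0 b0 rq e1 e2 hr' => [k h] [x y] [u w] /= r0 a0 b0 rq e1 e2 hr'.
have hc : (1 <= c1 + c2)%N.
  case: c1 c2 e1 e2 => [|c1] [|c2] //= e1 e2.
  by exfalso; apply: rq; congr pair; lia.
case: hr' => [[eu ew]|[[eu ew]|[eu ew]]]; [exists 0%N | exists 1%N | exists 2%N];
  exists c1, c2; rewrite /phi /dd /=; (split => //; [congr pair; lia|rewrite /Sigma /vsub /=; split; lia]).
Qed.

Lemma gpow_supp l p q : gpow TT l p q != 0 ->
  if l is 0%N then p = q else Sigma l (vsub q p).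
Proof.
elim: l q => [|l IH] q.
  by rewrite /= /gid; case: (eqVneq p q) => // _; rewrite eqxx.
rewrite /= /gprod => /esum_neq0 [r /prod_neq0 [h1 h2]].
have [e [c1 [c2 [_ _ _ _ S1]]]] := @TT_param _ _ h2.
have := IH _ h1; case: l {IH h1} => [->|l] //.
move: S1; rewrite /Sigma /vsub /= => -[a1 a2 a3 a4 a5] [b1 b2 b3 b4 b5].
split; lia.
Qed.

Lemma gpow_sv l p q : gpow TT l p q != 0 -> (sv p + l%:Z <= sv q)%R.
Proof.
move=> /gpow_supp; case: l => [->|l]; first by rewrite addr0.
by rewrite /Sigma /vsub /sv /= => -[a1 a2 a3 a4 a5]; lia.
Qed.

Lemma term_bound r q r' : G1 R r r' * G2 R r' q <=
  (8 * 2 ^+ absz (sv q - sv r) * gg R q / gg R r)%:E.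
Proof.
have g0 := gg_gt0 R r; have g1 := gg_gt0 R q; have g2 := gg_gt0 R r'.
have B0 : (0 <= 8 * 2 ^+ absz (sv q - sv r) * gg R q / gg R r)%R.
  by apply: divr_ge0; [apply: mulr_ge0; [apply: mulr_ge0 => //; apply: exprn_ge0|]|]; lra.
case: (eqVneq (G1 R r r') 0) => [->|h1]; first by rewrite mul0e lee_fin.
case: (eqVneq (G2 R r' q) 0) => [->|h2]; first by rewrite mule0 lee_fin.
have [_ hr'] := @G1_supp R _ _ h1.
have es : sv r' = sv r by rewrite /sv; case: hr' => [->|[->|->]] /=; lia.
have hp := @G2_pot R _ _ h2.
rewrite -/(sv q) -/(sv r') es in hp.
apply: (le_trans (lee_pmul (G1_ge0 _ _ _) (G2_ge0 _ _ _) (lexx _) (G2_le1 _ _ _))).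
rewrite mule1; apply: (le_trans (G1_bound _ _ _)); rewrite lee_fin.
rewrite -!mulrA ler_pM2l // !mulrA ler_pM2r ?invr_gt0 //.
Qed.

Lemma TT_bound r q : TT r q <= (24 * 2 ^+ absz (sv q - sv r) * gg R q / gg R r)%:E.
Proof.
rewrite /TT /gprod.
set B := (8 * 2 ^+ absz (sv q - sv r) * gg R q / gg R r)%R.
apply: (le_trans (@esum_le_list R vtx _ _ [:: (r.1 - 2, r.2 + 2)%R; r; (r.1 + 2, r.2 - 2)%R] id _ _)).
- by move=> i; apply: mule_ge0; [apply: G1_ge0|apply: G2_ge0].
- move=> i /prod_neq0 [h1 _]; exists i => //.
  have [_ hr'] := @G1_supp R _ _ h1.
  by rewrite !inE; case: hr' => [->|[->|->]]; rewrite eqxx ?orbT.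
rewrite !big_cons big_nil /=.
have t1 := term_bound r q (r.1 - 2, r.2 + 2)%R.
have t2 := term_bound r q r.
have t3 := term_bound r q (r.1 + 2, r.2 - 2)%R.
rewrite -/B in t1 t2 t3.
apply: (le_trans (leeD t1 (leeD t2 (leeD t3 (lexx 0))))).
rewrite adde0 -!EFinD lee_fin /B le_eqVlt; apply/orP; left; apply/eqP; ring.
Qed.

Lemma geom n : (\sum_(c <- iota 0 n) (1/2) ^+ c = 2 - 2 * (1/2) ^+ n :> R)%R.
Proof.
elim: n => [|n IH]; first by rewrite big_nil expr0; lra.
rewrite -addn1 iotaD big_cat /= big_seq1 IH add0n exprD expr1.
have h : (0 <= (1/2 : R) ^+ n)%R by apply: exprn_ge0; lra.
lra.
Qed.

Lemma geom_le n : (\sum_(c <- iota 0 n) (1/2) ^+ c <= 2 :> R)%R.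
Proof.
rewrite geom; have h : (0 <= (1/2 : R) ^+ n)%R by apply: exprn_ge0; lra.
lra.
Qed.

Lemma pow_id D c1 c2 : (c1 + c2 <= D)%N ->
  (4 ^+ (D - (c1 + c2)) * 2 ^+ (c1 + c2) = 4 ^+ D * (1/2) ^+ c1 * (1/2) ^+ c2 :> R)%R.
Proof.
move=> hc; rewrite -mulrA -exprD.
set c := (c1 + c2)%N.
have -> : (4 ^+ D = 4 ^+ (D - c) * 4 ^+ c :> R)%R by rewrite -exprD subnK.
rewrite -mulrA; congr (_ * _)%R.
rewrite (_ : (4 = 2 * 2 :> R)%R); last by lra.
rewrite exprMn -mulrA -exprMn (_ : (2 * (1/2) = 1 :> R)%R); last by lra.
by rewrite expr1n mulr1.
Qed.

Lemma gpow_ge0 l p q : 0 <= gpow TT l p q.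
Proof.
elim: l q => [|l IH] q; first by rewrite /= /gid; case: ifP.
apply: esum_ge0 => r _; apply: mule_ge0 => //.
by apply: esum_ge0 => r' _; apply: mule_ge0; [apply: G1_ge0|apply: G2_ge0].
Qed.

Lemma TT_ge0 r q : 0 <= TT r q.
Proof. by apply: esum_ge0 => r' _; apply: mule_ge0; [apply: G1_ge0|apply: G2_ge0]. Qed.

Lemma gpow_bound l p q :
  gpow TT l p q <= (288 ^+ l * 4 ^+ absz (sv q - sv p) * gg R q / gg R p)%:E.
Proof.
elim: l q => [|l IH] q.
  rewrite /= /gid; case: (eqVneq p q) => [<-|_].
    by rewrite subrr /= expr0 !mul1r mulfV ?lt0r_neq0 ?gg_gt0.
  rewrite lee_fin; apply: divr_ge0; last exact: ltW (gg_gt0 _ _).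
  by apply: mulr_ge0; [apply: mulr_ge0; apply: exprn_ge0|exact: ltW (gg_gt0 _ _)].
rewrite /= /gprod.
set D := absz (sv q - sv p).
have gq := gg_gt0 R q; have gp := gg_gt0 R p.
set K := (288 ^+ l * 24 * 4 ^+ D * gg R q / gg R p)%R.
have K0 : (0 <= K)%R.
  apply: divr_ge0; last lra.
  apply: mulr_ge0; last lra.
  by apply: mulr_ge0; [apply: mulr_ge0 => //; apply: exprn_ge0|apply: exprn_ge0].
set L := [seq (e, c) | e <- iota 0 3, c <- [seq (c1, c2) | c1 <- iota 0 D.+1, c2 <- iota 0 D.+1]].
apply: (le_trans (@esum_le_list R vtx _ _ L (phi q) _ _)).
- by move=> r; apply: mule_ge0; [apply: gpow_ge0|apply: TT_ge0].
- move=> r /prod_neq0 [h1 h2].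
  have [e [c1 [c2 [he hc er _ _]]]] := @TT_param _ _ h2.
  have hs := @gpow_sv _ _ _ h1.
  exists (e, (c1, c2)) => //.
  have hD : (c1 + c2 <= D)%N by rewrite /D; move: hs; rewrite er /phi /sv /dd /=; case: ifP => _; [|case: ifP => _]; lia.
  apply: allpairs_f; first by rewrite mem_iota.
  by apply: allpairs_f; rewrite mem_iota; lia.
apply: (@le_trans _ _ (\sum_(j <- L) (K * (1/2) ^+ j.2.1 * (1/2) ^+ j.2.2)%:E)).
  apply: lee_sum => -[e [c1 c2]] _ /=.
  set r := phi q (e, (c1, c2)).
  case: (eqVneq (gpow TT l p r) 0) => [->|h1].
    by rewrite mul0e lee_fin; apply: mulr_ge0; [apply: mulr_ge0 => //|]; apply: exprn_ge0; lra.
  have hs := @gpow_sv _ _ _ h1.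
  have esr : (sv q - sv r = (c1 + c2)%N%:Z)%R by rewrite /r /phi /sv /dd /=; case: ifP => _; [|case: ifP => _]; lia.
  have hD : (c1 + c2 <= D)%N by rewrite /D; lia.
  have ed1 : absz (sv r - sv p) = (D - (c1 + c2))%N by rewrite /D; lia.
  have ed2 : absz (sv q - sv r) = (c1 + c2)%N by lia.
  apply: (le_trans (lee_pmul (gpow_ge0 _ _ _) (TT_ge0 _ _) (IH r) (TT_bound r q))).
  rewrite -EFinM lee_fin ed1 ed2.
  have gr := gg_gt0 R r.
  have E := pow_id D c1 c2 hD.
  have -> : (K * (1/2) ^+ c1 * (1/2) ^+ c2 =
     288 ^+ l * 24 * (4 ^+ D * (1/2) ^+ c1 * (1/2) ^+ c2) * gg R q / gg R p)%R by rewrite /K; ring.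
  rewrite -E le_eqVlt; apply/orP; left; apply/eqP.
  by field; apply/andP; split; rewrite lt0r_neq0.
rewrite sumEFin lee_fin /L big_allpairs.
apply: (@le_trans _ _ (\sum_(e <- iota 0 3) (4 * K))%R).
  apply: ler_sum => e _.
  rewrite big_allpairs /=.
  apply: (@le_trans _ _ (\sum_(c1 <- iota 0 D.+1) (K * (1/2) ^+ c1 * 2))%R).
    apply: ler_sum => c1 _.
    rewrite (eq_bigr (fun c2 => K * (1/2) ^+ c1 * (1/2) ^+ c2)%R) //.
    rewrite -mulr_sumr; apply: ler_wpM2l; last by have := geom_le D.+1.
    by apply: mulr_ge0 => //; apply: exprn_ge0; lra.
  rewrite (eq_bigr (fun c1 => (K * 2) * (1/2) ^+ c1)%R); last by move=> c1 _; ring.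
  rewrite -mulr_sumr.
  have := geom_le D.+1; nra.
rewrite /= !big_cons big_nil /K.
rewrite le_eqVlt; apply/orP; left; apply/eqP.
rewrite exprS; field; rewrite lt0r_neq0 //.
Qed.

End Main.

Lemma gg_Pf (R : realType) v : (Pf (absz (tt v)) (aa v)%:R <= (3/2) ^+ vnorm v :> R)%R.
Proof.
apply: (le_trans (Pbound _ _)).
rewrite ler_eXn2l; last lra.
rewrite /tt /aa /vnorm; lia.
Qed.

Lemma gg_le (R : realType) v : (gg R v <= (3/2) ^+ vnorm v)%R.
Proof. exact: le_trans (Phi_le _ _ _) (gg_Pf R v). Qed.

Lemma gg_inv_le (R : realType) v : ((gg R v)^-1 <= (3/2) ^+ vnorm v)%R.
Proof.
apply: le_trans (gg_Pf R v).
have h := Phi_ge R (tt v) (aa v).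
rewrite -[X in (_ <= X)%R]invrK lef_pV2 ?posrE ?invr_gt0 ?gg_gt0 ?P_gt0 //.
Qed.

Theorem mainTheorem11 (R : realType) :
  exists C3 : R, 0 < C3 /\
    forall (l : nat) (p q : vtx), (1 <= l)%N -> 0 <= p.1 -> 0 <= q.1 ->
      (gpow (gprod (G1 R) (G2 R)) l p q <= (C3 ^+ (vnorm p + vnorm q))%:E)%E /\
      (gpow (gprod (G1 R) (G2 R)) l p q <> 0%E -> Sigma l (vsub q p)).
Proof.
exists 1728; split; first lra.
move=> l p q hl hp hq.
rewrite -/(TT R).
have SS : gpow (TT R) l p q <> 0%E -> Sigma l (vsub q p).
  move=> /eqP /gpow_supp; case: l hl => //.
split => //.
set N := (vnorm p + vnorm q)%N.
have C0 : (0 <= 1728 ^+ N :> R)%R by apply: exprn_ge0; lra.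
case: (eqVneq (gpow (TT R) l p q) 0%E) => [->|h]; first by rewrite lee_fin.
have := SS (elimN eqP h); rewrite /Sigma /vsub /= => -[s1 s2 s3 s4 s5].
apply: (le_trans (gpow_bound _ _ _ _)); rewrite lee_fin.
set D := absz (sv q - sv p).
have hlD : (l <= D)%N by rewrite /D /sv; lia.
have hDN : (D <= N)%N by rewrite /D /sv /N /vnorm; lia.
have e1 : (288 ^+ l <= 288 ^+ N :> R)%R by rewrite ler_eXn2l; [exact: leq_trans hlD hDN|lra].
have e2 : (4 ^+ D <= 4 ^+ N :> R)%R by rewrite ler_eXn2l; [|lra].
have e3 := gg_le R q.
have e4 := gg_inv_le R p.
have gq := gg_gt0 R q; have gp := gg_gt0 R p.
have -> : (1728 ^+ N = 288 ^+ N * 4 ^+ N * (3/2) ^+ vnorm q * (3/2) ^+ vnorm p :> R)%R.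
  by rewrite -!exprMn -mulrA -exprD addnC -/N -!exprMn; congr (_ ^+ _); lra.
have L1 : (288 ^+ l * 4 ^+ D <= 288 ^+ N * 4 ^+ N :> R)%R.
  by apply: ler_pM; [apply: exprn_ge0; lra|apply: exprn_ge0; lra|exact: e1|exact: e2].
have L2 : (gg R q * (gg R p)^-1 <= (3/2) ^+ vnorm q * (3/2) ^+ vnorm p :> R)%R.
  by apply: ler_pM; [lra|rewrite invr_ge0; lra|exact: e3|exact: e4].
have L0 : (0 <= 288 ^+ l * 4 ^+ D :> R)%R by apply: mulr_ge0; apply: exprn_ge0; lra.
have L0' : (0 <= gg R q * (gg R p)^-1)%R by apply: mulr_ge0; [lra|rewrite invr_ge0; lra].
have := ler_pM L0 L0' L1 L2.
by rewrite !mulrA.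
Qed.
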